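(* Let $\Omega\subset\mathbb{R}^n$ and let $h^{jk}\in C^2$ ($j,k=1,\dots,n$) be functions of $x$ with $h^{jk}=h^{kj}$. Let $u\in C^2(\mathbb{R}^{2+n};\mathbb{R})$, $\ell\in C^3(\mathbb{R}^{2+n};\mathbb{R})$ (functions of $(t,s,x)$) and $\Psi\in C^1(\mathbb{R}^n;\mathbb{R})$. Set $\theta=e^\ell$ and $v=\theta u$. Define $$A=\sum_{j,k=1}^n(h^{jk}\ell_{x_j}\ell_{x_k}-h^{jk}_{x_j}\ell_{x_k}-h^{jk}\ell_{x_jx_k})-\ell_t^2-\ell_s^2+\ell_{tt}+\ell_{ss}-\Psi,$$ $$c^{jk}=\sum_{j',k'=1}^n\big[2h^{jk'}(h^{j'k}\ell_{x_{j'}})_{x_{k'}}-(h^{jk}h^{j'k'}\ell_{x_{j'}})_{x_{k'}}\big]+h^{jk}(\ell_{tt}+\ell_{ss}-\Psi),$$ $$B=2\Big[A\Psi-(A\ell_t)_t-(A\ell_s)_s+\sum_{j,k=1}^n(Ah^{jk}\ell_{x_j})_{x_k}\Big],$$ $V=(V^1,\dots,V^n)$ with $$V^k=2\sum_{j,j',k'}h^{jk}h^{j'k'}\ell_{x_{j'}}v_{x_j}v_{x_{k'}}+\sum_jh^{jk}A\ell_{x_j}v^2-\Psi v\sum_jh^{jk}v_{x_j}-\sum_{j,j',k'}h^{jk}h^{j'k'}\ell_{x_j}v_{x_{j'}}v_{x_{k'}}-2(\ell_tv_t+\ell_sv_s)\sum_jh^{jk}v_{x_j}+\sum_jh^{jk}\ell_{x_j}(v_t^2+v_s^2),$$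 $$M=\ell_t\Big(v_t^2-v_s^2+\sum_{j,k}h^{jk}v_{x_j}v_{x_k}\Big)-2\sum_{j,k}h^{jk}\ell_{x_j}v_{x_k}v_t+2\ell_sv_sv_t+\Psi vv_t-A\ell_tv^2,$$ $$N=\ell_s\Big(v_s^2-v_t^2+\sum_{j,k}h^{jk}v_{x_j}v_{x_k}\Big)-2\sum_{j,k}h^{jk}\ell_{x_j}v_{x_k}v_s+2\ell_tv_sv_t+\Psi vv_s-A\ell_sv^2.$$ Then, pointwise, $$\theta^2\Big|u_{tt}+u_{ss}-\sum_{j,k}(h^{jk}u_{x_j})_{x_k}\Big|^2+2\,\mathrm{div}\,V+2\partial_tM+2\partial_sN\ge 2\Big[\ell_{tt}-\ell_{ss}+\sum_{j,k}(h^{jk}\ell_{x_j})_{x_k}+\Psi\Big]v_t^2-8\sum_{j,k}h^{jk}\ell_{tx_j}v_{x_k}v_t+8\ell_{st}v_sv_t-8\sum_{j,k}h^{jk}\ell_{sx_j}v_{x_k}v_s+2\Big[\ell_{ss}-\ell_{tt}+\sum_{j,k}(h^{jk}\ell_{x_j})_{x_k}+\Psi\Big]v_s^2+2\sum_{j,k}c^{jk}v_{x_j}v_{x_k}-2\sum_{j,k}h^{jk}\Psi_{x_j}vv_{x_k}+Bv^2,$$ where $\mathrm{div}\,V=\sum_{k=1}^n\partial_{x_k}V^k$.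
   Context: Subscripts $t,s,x_j$ denote partial derivatives. The inequality holds at every point where all quantities are defined. *)

(* Defs.v *)
(* R : realType, points of R^{2+n} are row vectors
   'rV[R]_(2+n) with coordinates (t, s, x_0, ..., x_{n-1}). *)
From HB Require Import structures.
From mathcomp Require Import all_boot all_order all_algebra.
From mathcomp Require Import all_classical all_reals all_analysis.
Set Implicit Arguments. Unset Strict Implicit. Unset Printing Implicit Defensive.
Import Order.TTheory GRing.Theory Num.Theory.
Import numFieldNormedType.Exports.
Local Open Scope ring_scope.

Section Defs.
Variable R : realType.

Definition ev (m : nat) (i : 'I_m) : 'rV[R]_m := delta_mx 0 i.

Definition pd (m : nat) (i : 'I_m) (f : 'rV[R]_m -> R) : 'rV[R]_m -> R :=
  fun p => derive f p (ev i).

Fixpoint Ck (m : nat) (k : nat) (f : 'rV[R]_m -> R) : Prop :=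
  match k with
  | 0 => continuous f
  | k'.+1 => continuous f /\ (forall (i : 'I_m) p, derivable f p (ev i)) /\
             (forall i : 'I_m, Ck k' (pd i f))
  end.

Variable n : nat.

Definition tI : 'I_(2 + n) := lshift n (@Ordinal 2 0 isT).
Definition sI : 'I_(2 + n) := lshift n (@Ordinal 2 1 isT).
Definition xI (j : 'I_n) : 'I_(2 + n) := rshift 2 j.

Definition xpart (p : 'rV[R]_(2 + n)) : 'rV[R]_n := rsubmx p.

Definition Dt := pd tI.
Definition Ds := pd sI.
Definition Dx (j : 'I_n) := pd (xI j).

Variables (h : 'I_n -> 'I_n -> 'rV[R]_n -> R)
          (l u : 'rV[R]_(2 + n) -> R) (Psi : 'rV[R]_n -> R).

Definition H j k : 'rV[R]_(2 + n) -> R := fun p => h j k (xpart p).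
Definition Ps : 'rV[R]_(2 + n) -> R := fun p => Psi (xpart p).

Definition theta : 'rV[R]_(2 + n) -> R := fun p => expR (l p).
Definition v : 'rV[R]_(2 + n) -> R := fun p => theta p * u p.

Definition A : 'rV[R]_(2 + n) -> R := fun p =>
  \sum_(j < n) \sum_(k < n)
     (H j k p * Dx j l p * Dx k l p - Dx j (H j k) p * Dx k l p
      - H j k p * Dx k (Dx j l) p)
  - Dt l p ^+ 2 - Ds l p ^+ 2 + Dt (Dt l) p + Ds (Ds l) p - Ps p.

Definition c (j k : 'I_n) : 'rV[R]_(2 + n) -> R := fun p =>
  \sum_(j' < n) \sum_(k' < n)
     (2 * H j k' p * Dx k' (fun q => H j' k q * Dx j' l q) p
      - Dx k' (fun q => H j k q * H j' k' q * Dx j' l q) p)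
  + H j k p * (Dt (Dt l) p + Ds (Ds l) p - Ps p).

Definition B : 'rV[R]_(2 + n) -> R := fun p =>
  2 * (A p * Ps p - Dt (fun q => A q * Dt l q) p - Ds (fun q => A q * Ds l q) p
       + \sum_(j < n) \sum_(k < n) Dx k (fun q => A q * H j k q * Dx j l q) p).

Definition V (k : 'I_n) : 'rV[R]_(2 + n) -> R := fun p =>
  2 * (\sum_(j < n) \sum_(j' < n) \sum_(k' < n)
         H j k p * H j' k' p * Dx j' l p * Dx j v p * Dx k' v p)
  + (\sum_(j < n) H j k p * A p * Dx j l p) * v p ^+ 2
  - Ps p * v p * (\sum_(j < n) H j k p * Dx j v p)
  - (\sum_(j < n) \sum_(j' < n) \sum_(k' < n)
         H j k p * H j' k' p * Dx j l p * Dx j' v p * Dx k' v p)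
  - 2 * (Dt l p * Dt v p + Ds l p * Ds v p) * (\sum_(j < n) H j k p * Dx j v p)
  + (\sum_(j < n) H j k p * Dx j l p) * (Dt v p ^+ 2 + Ds v p ^+ 2).

Definition M : 'rV[R]_(2 + n) -> R := fun p =>
  Dt l p * (Dt v p ^+ 2 - Ds v p ^+ 2
            + \sum_(j < n) \sum_(k < n) H j k p * Dx j v p * Dx k v p)
  - 2 * (\sum_(j < n) \sum_(k < n) H j k p * Dx j l p * Dx k v p) * Dt v p
  + 2 * Ds l p * Ds v p * Dt v p + Ps p * v p * Dt v p
  - A p * Dt l p * v p ^+ 2.

Definition N : 'rV[R]_(2 + n) -> R := fun p =>
  Ds l p * (Ds v p ^+ 2 - Dt v p ^+ 2
            + \sum_(j < n) \sum_(k < n) H j k p * Dx j v p * Dx k v p)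
  - 2 * (\sum_(j < n) \sum_(k < n) H j k p * Dx j l p * Dx k v p) * Ds v p
  + 2 * Dt l p * Ds v p * Dt v p + Ps p * v p * Ds v p
  - A p * Ds l p * v p ^+ 2.

Definition divV : 'rV[R]_(2 + n) -> R := fun p => \sum_(k < n) Dx k (V k) p.

Definition lhs31 : 'rV[R]_(2 + n) -> R := fun p =>
  theta p ^+ 2 * `| Dt (Dt u) p + Ds (Ds u) p
                    - \sum_(j < n) \sum_(k < n) Dx k (fun q => H j k q * Dx j u q) p | ^+ 2
  + 2 * divV p + 2 * Dt M p + 2 * Ds N p.

Definition rhs31 : 'rV[R]_(2 + n) -> R := fun p =>
  2 * (Dt (Dt l) p - Ds (Ds l) p
       + \sum_(j < n) \sum_(k < n) Dx k (fun q => H j k q * Dx j l q) p + Ps p)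
    * Dt v p ^+ 2
  - 8 * (\sum_(j < n) \sum_(k < n) H j k p * Dx j (Dt l) p * Dx k v p * Dt v p)
  + 8 * Dt (Ds l) p * Ds v p * Dt v p
  - 8 * (\sum_(j < n) \sum_(k < n) H j k p * Dx j (Ds l) p * Dx k v p * Ds v p)
  + 2 * (Ds (Ds l) p - Dt (Dt l) p
         + \sum_(j < n) \sum_(k < n) Dx k (fun q => H j k q * Dx j l q) p + Ps p)
    * Ds v p ^+ 2
  + 2 * (\sum_(j < n) \sum_(k < n) c j k p * Dx j v p * Dx k v p)
  - 2 * (\sum_(j < n) \sum_(k < n) H j k p * Dx j Ps p * v p * Dx k v p)
  + B p * v p ^+ 2.

End Defs.

(* Main.v *)
Require Import Defs.
From HB Require Import structures.
From mathcomp Require Import all_boot all_order all_algebra.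
From mathcomp Require Import all_classical all_reals all_analysis.
From mathcomp Require Import ring lra.
Import Order.TTheory GRing.Theory Num.Theory.
Import numFieldNormedType.Exports.
Local Open Scope ring_scope.

Section GenDeriv.
Variables (R : realType) (W : normedModType R).
Implicit Types f g : W -> R.

Definition HD f (v : W) p df := derivable f p v /\ derive f p v = df.

Lemma HD_cst (c : R) v p : HD (fun _ => c) v p 0.
Proof. split; [exact: derivable_cst | exact: derive_cst]. Qed.

Lemma HD_add f g v p df dg : HD f v p df -> HD g v p dg ->
  HD (fun q => f q + g q) v p (df + dg).
Proof.
move=> [f1 f2] [g1 g2]; split; first exact: (derivableD f1 g1).
by rewrite -f2 -g2; exact: (deriveD f1 g1).
Qed.

Lemma HD_opp f v p df : HD f v p df -> HD (fun q => - f q) v p (- df).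
Proof.
move=> [f1 f2]; split; first exact: (derivableN f1).
by rewrite -f2; exact: (deriveN f1).
Qed.

Lemma HD_mul f g v p df dg : HD f v p df -> HD g v p dg ->
  HD (fun q => f q * g q) v p (f p * dg + g p * df).
Proof.
move=> [f1 f2] [g1 g2]; split; first exact: (derivableM f1 g1).
by rewrite -f2 -g2; exact: (deriveM f1 g1).
Qed.

Lemma HD_ext f g v p df : f = g -> HD f v p df -> HD g v p df.
Proof. by move->. Qed.

Lemma HD_sum (I : Type) (s : seq I) (F : I -> W -> R) dF v p :
  (forall i, HD (F i) v p (dF i)) ->
  HD (fun q => \sum_(i <- s) F i q) v p (\sum_(i <- s) dF i).
Proof.
move=> HF; elim: s => [|i s IH].
  apply: (@HD_ext (fun _ => 0)); first by apply/funext => q; rewrite big_nil.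
  by rewrite big_nil; exact: HD_cst.
apply: (@HD_ext (fun q => F i q + \sum_(j <- s) F j q)).
  by apply/funext => q; rewrite big_cons.
rewrite big_cons; exact: HD_add.
Qed.

Lemma HD_prod (I : Type) (s : seq I) (F : I -> W -> R) v p :
  (forall i, derivable (F i) p v) ->
  derivable (fun q => \prod_(i <- s) F i q) p v.
Proof.
move=> HF; elim: s => [|i s IH].
  have -> : (fun q => \prod_(i <- [::]) F i q) = (fun _ => 1) by apply/funext => q; rewrite big_nil.
  exact: derivable_cst.
have -> : (fun q => \prod_(j <- i :: s) F j q) = (fun q => F i q * \prod_(j <- s) F j q).
  by apply/funext => q; rewrite big_cons.
exact: (derivableM (HF i) IH).
Qed.

Lemma HD_sum_in (I : eqType) (s : seq I) (F : I -> W -> R) dF v p :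
  (forall i, i \in s -> HD (F i) v p (dF i)) ->
  HD (fun q => \sum_(i <- s) F i q) v p (\sum_(i <- s) dF i).
Proof.
elim: s => [|i s IH] HF.
  apply: (@HD_ext (fun _ => 0)); first by apply/funext => q; rewrite big_nil.
  by rewrite big_nil; exact: HD_cst.
apply: (@HD_ext (fun q => F i q + \sum_(j <- s) F j q)).
  by apply/funext => q; rewrite big_cons.
rewrite big_cons; apply: HD_add; first by apply: HF; rewrite mem_head.
by apply: IH => j js; apply: HF; rewrite in_cons js orbT.
Qed.

End GenDeriv.
Arguments HD {R W} f v p df.
Arguments HD_cst {R W}. Arguments HD_add {R W}. Arguments HD_opp {R W}.
Arguments HD_mul {R W}. Arguments HD_ext {R W}. Arguments HD_sum {R W}.
Arguments HD_prod {R W}. Arguments HD_sum_in {R W}.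
Section Ana.
Variables (R : realType) (m : nat).
Local Notation W := 'rV[R]_m.
Implicit Types f g : W -> R.

Lemma line_eq f (v c : W) (t0 : R) :
  (fun h : R => h^-1 *: (((fun t : R => f (t *: v + c)) \o shift t0) (h *: 1)
                          - (fun t : R => f (t *: v + c)) t0)) =
  (fun h : R => h^-1 *: ((f \o shift (t0 *: v + c)) (h *: v) - f (t0 *: v + c))).
Proof.
apply/funext => h /=; congr (_ *: (_ - _)); congr f.
by rewrite -[h%:A]/(h * 1) mulr1 scalerDl addrA.
Qed.

Lemma line_derivable f (v c : W) (t0 : R) :
  derivable (fun t : R => f (t *: v + c)) t0 1 <-> derivable f (t0 *: v + c) v.
Proof. by rewrite /derivable line_eq. Qed.

Lemma line_derive f (v c : W) (t0 : R) :
  derive (fun t : R => f (t *: v + c)) t0 1 = derive f (t0 *: v + c) v.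
Proof. by rewrite /derive line_eq. Qed.

Lemma Ck_cont k f : Ck k f -> continuous f.
Proof. by case: k => [|k] //= [] . Qed.

Lemma Ck_der k f : Ck k.+1 f -> forall i p, derivable f p (ev R i).
Proof. by case=> _ []. Qed.

Lemma Ck_pd k f : Ck k.+1 f -> forall i, Ck k (pd i f).
Proof. by case=> _ []. Qed.

Lemma Ck_S k f : Ck k.+1 f -> Ck k f.
Proof.
elim: k f => [|k IH] f; first by case.
case=> c [d hp]; split => //; split => // i; exact: IH.
Qed.

Lemma Ck_le k j f : (j <= k)%N -> Ck k f -> Ck j f.
Proof.
move=> jk; rewrite -(subnK jk); elim: (k - j)%N => [|d IH] //= H.
by apply: IH; apply: Ck_S.
Qed.

Lemma pd_cst0 i : pd i (fun _ : W => (0 : R)) = (fun _ => 0).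
Proof. by apply/funext => p; rewrite /pd derive_cst. Qed.

Lemma Ck_cst0 k : Ck k (fun _ : W => (0 : R)).
Proof.
elim: k => [|k IH] /=; first exact: cst_continuous.
split; first exact: cst_continuous.
split; first by move=> *; exact: derivable_cst.
by move=> i; rewrite pd_cst0.
Qed.

Lemma cont_delta g p (eps : R) : {for p, continuous g} -> 0 < eps ->
  exists2 d : R, 0 < d & forall q, `|q - p| < d -> `|g q - g p| < eps.
Proof.
move=> /cvgrPdist_lt /(_ eps) H /H /nbhs_ballP [d d0 hd]; exists d => // q hq.
rewrite distrC; apply: hd; rewrite -ball_normE /= distrC //.
Qed.

End Ana.
Arguments Ck_cont {R m k f}. Arguments Ck_der {R m k f}. Arguments Ck_pd {R m k f}.
Arguments Ck_S {R m k f}. Arguments Ck_le {R m k j f}. Arguments cont_delta {R m g p eps}.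
Arguments line_derivable {R m f v c t0}. Arguments line_derive {R m f v c t0}.
Section Clair.
Variables (R : realType) (m : nat).
Local Notation W := 'rV[R]_m.
Implicit Types f g : W -> R.

Lemma line_HD f (v c : W) (t0 : R) :
  derivable f (t0 *: v + c) v ->
  HD (fun t : R => f (t *: v + c)) 1 t0 (derive f (t0 *: v + c) v).
Proof. by move=> d; split; [apply/line_derivable | rewrite line_derive]. Qed.

Lemma mvt_HD (g dg : R -> R) (a b : R) : (forall x, HD g 1 x (dg x)) -> a < b ->
  exists c, [/\ a < c, c < b & g b - g a = dg c * (b - a)].
Proof.
move=> Hg ab.
have [c cab ->] := MVT ab (fun x _ => DeriveDef (proj1 (Hg x)) (proj2 (Hg x)))
   (derivable_within_continuous (fun x _ => proj1 (Hg x))).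
by exists c; move: cab; rewrite in_itv /= => /andP[-> ->].
Qed.

Definition delta f (v w : W) (s : R) p :=
  f (s *: v + (s *: w + p)) - f (s *: v + p) - (f (s *: w + p) - f p).

Lemma delta_sym f v w s p : delta f v w s p = delta f w v s p.
Proof.
rewrite /delta [s *: w + (s *: v + p)]addrCA.
move: (f (s *: v + (s *: w + p))) (f (s *: v + p)) (f (s *: w + p)) (f p) => a b c d.
ring.
Qed.

Lemma mvt2 f i j (s : R) p : Ck 2 f -> 0 < s ->
  exists q, `|q - p| <= s * (`|ev R i| + `|ev R j|) /\
   delta f (ev R i) (ev R j) s p = s * (s * pd j (pd i f) q).
Proof.
move=> Hf s0; set e1 := ev R i; set e2 := ev R j.
have dF : forall q k, derivable f q (ev R k) := fun q k => Ck_der Hf k q.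
have dG : forall q k, derivable (pd i f) q (ev R k) := fun q k => Ck_der (Ck_pd Hf i) k q.
have Hphi : forall x : R, HD (fun x : R => f (x *: e1 + (s *: e2 + p)) - f (x *: e1 + p)) 1 x
    (pd i f (x *: e1 + (s *: e2 + p)) - pd i f (x *: e1 + p)).
  by move=> x; apply: HD_add; [|apply: HD_opp]; apply: line_HD; apply: dF.
have [xi [x0 xs ex]] := mvt_HD _ _ _ _ Hphi s0.
have Hpsi : forall y : R, HD (fun y : R => pd i f (y *: e2 + (xi *: e1 + p))) 1 y
    (pd j (pd i f) (y *: e2 + (xi *: e1 + p))).
  by move=> y; apply: line_HD; apply: dG.
have [eta [y0 ys ey]] := mvt_HD _ _ _ _ Hpsi s0.
exists (eta *: e2 + (xi *: e1 + p)); split.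
  rewrite addrA addrK (le_trans (ler_normD _ _)) // !normrZ mulrDr addrC.
  rewrite !gtr0_norm //; apply: lerD; apply: ler_wpM2r => //; exact: ltW.
rewrite /delta; move: ex; rewrite !scale0r !add0r subr0 => ->.
rewrite (_ : xi *: e1 + (s *: e2 + p) = s *: e2 + (xi *: e1 + p)); last by rewrite addrCA.
rewrite (_ : pd i f (xi *: e1 + p) = pd i f (0 *: e2 + (xi *: e1 + p))); last by rewrite scale0r add0r.
rewrite ey subr0; ring.
Qed.

Lemma clairaut f i j p : Ck 2 f -> pd j (pd i f) p = pd i (pd j f) p.
Proof.
move=> Hf; set F1 := pd j (pd i f); set F2 := pd i (pd j f).
have c1 : continuous F1 := Ck_cont (Ck_pd (Ck_pd Hf i) j).
have c2 : continuous F2 := Ck_cont (Ck_pd (Ck_pd Hf j) i).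
apply/eqP; rewrite -subr_eq0; apply/negPn/negP => hD.
set eps := `|F1 p - F2 p| / 2.
have e0 : 0 < eps by rewrite divr_gt0 // normr_gt0.
have [d1 d10 hd1] := cont_delta (c1 p) e0.
have [d2 d20 hd2] := cont_delta (c2 p) e0.
set C := `|ev R i| + `|ev R j| + 1.
have C0 : 0 < C by rewrite ltr_wpDl // addr_ge0.
set s := Num.min d1 d2 / C.
have s0 : 0 < s by rewrite divr_gt0 // lt_min d10 d20.
have sC : forall d, Num.min d1 d2 <= d -> s * (`|ev R i| + `|ev R j|) < d.
  move=> d md; apply: lt_le_trans md.
  rewrite /s -mulrA gtr_pMr ?lt_min ?d10 ?d20 // ltr_pdivrMl // mulr1 /C.
  by rewrite ltrDl.
have [q1 [nq1 E1]] := mvt2 f i j s p Hf s0.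
have [q2 [nq2 E2]] := mvt2 f j i s p Hf s0.
have Fq : F1 q1 = F2 q2.
  rewrite delta_sym in E1.
  have := etrans (esym E1) E2.
  by move/(mulfI (lt0r_neq0 s0))/(mulfI (lt0r_neq0 s0)).
have : `|F1 p - F2 p| < `|F1 p - F2 p|; last by rewrite ltxx.
rewrite {1}(_ : F1 p - F2 p = (F1 p - F1 q1) + (F2 q2 - F2 p)); last by rewrite Fq addrA subrK.
apply: (le_lt_trans (ler_normD _ _)).
rewrite [ltRHS](_ : _ = eps + eps); last by rewrite /eps -splitr.
have m1 : Num.min d1 d2 <= d1 by rewrite ge_min lexx.
have m2 : Num.min d1 d2 <= d2 by rewrite ge_min lexx orbT.
apply: ltrD; first by rewrite distrC; apply: hd1; exact: le_lt_trans nq1 (sC _ m1).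
apply: hd2; apply: le_lt_trans nq2 _; rewrite [_ + _]addrC; exact: sC _ m2.
Qed.

End Clair.
Inductive ex :=
| Cst of nat | At of nat & seq nat & seq nat | Add of ex & ex | Mul of ex & ex
| Opp of ex | Sum of ex | Der of nat & ex.

Definition atom := (nat * seq nat * seq nat)%type.
Definition mono := (int * nat * seq atom)%type.

Definition dren (f : nat -> nat) (d : nat) := if d is v.+2 then (f v).+2 else d.
Definition aren f (a : atom) : atom := (a.1.1, map f a.1.2, map (dren f) a.2).
Definition shv (c k x : nat) := if (x < c)%N then x else (x + k)%N.

Definition mmul (m1 m2 : mono) : mono :=
  (m1.1.1 * m2.1.1, (m1.1.2 + m2.1.2)%N,
   map (aren (addn^~ m2.1.2)) m1.2 ++ map (aren (shv m2.1.2 m1.1.2)) m2.2).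

Definition dshift k d := if d is v.+2 then (v + k).+2 else d.
Definition datom (a : atom) (d : nat) : seq (int * seq atom) :=
  if (a.1.1 == 2%N) && (a.2 == [::]) then [:: (1%:Z, [:: a; (0%N, [::], [:: d])])]
  else [:: (1%:Z, [:: (a.1.1, a.1.2, rcons a.2 d)])].
Fixpoint dprod (d : nat) (A : seq atom) : seq (int * seq atom) :=
  if A is a :: A' then [seq (p.1, p.2 ++ A') | p <- datom a d] ++
                       [seq (p.1, a :: p.2) | p <- dprod d A']
  else [::].
Definition dmono d (m : mono) : seq mono :=
  [seq (m.1.1 * p.1, m.1.2, p.2) | p <- dprod (dshift m.1.2 d) m.2].
Definition dpoly d (P : seq mono) := flatten [seq dmono d m | m <- P].

Fixpoint norm (e : ex) : seq mono :=
  match e with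
  | Cst c => [:: (c%:Z, 0%N, [::])]
  | At b hs ds => [:: (1%:Z, 0%N, [:: (b, hs, ds)])]
  | Add e1 e2 => norm e1 ++ norm e2
  | Mul e1 e2 => [seq mmul m1 m2 | m1 <- norm e1, m2 <- norm e2]
  | Opp e => [seq (- m.1.1, m.1.2, m.2) | m <- norm e]
  | Sum e => [seq (m.1.1, m.1.2.+1, m.2) | m <- norm e]
  | Der d e => dpoly d (norm e)
  end.

Definition dvok (a : atom) : bool :=
  match a.1.1 with
  | 0 => (size a.2 <= 2)%N | 1 => (size a.2 <= 1)%N | 2 => a.2 == [::]
  | 3 => (size a.2 <= 1)%N | 4 => a.2 == [::] | _ => false end.

Fixpoint okder (e : ex) : bool :=
  match e with
  | Cst _ | At _ _ _ => true
  | Add e1 e2 | Mul e1 e2 => okder e1 && okder e2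
  | Opp e | Sum e => okder e
  | Der d e => okder e && all (fun m => all dvok m.2) (norm e)
  end.

Section Frame.
Variables (R : realType) (n : nat) (h : 'I_n -> 'I_n -> 'rV[R]_n -> R)
  (l u : 'rV[R]_(2 + n) -> R) (Psi : 'rV[R]_n -> R).
Local Notation VV := 'rV[R]_(2 + n).

Definition optdir (o : option 'I_n) : 'I_(2 + n) := if o is Some a then xI a else tI n.
Definition dirI (rho : seq 'I_n) (d : nat) : 'I_(2 + n) :=
  match d with 0 => tI n | 1 => sI n | v.+2 => optdir (onth rho v) end.
Fixpoint applyds (rho : seq 'I_n) (ds : seq nat) (f : VV -> R) : VV -> R :=
  if ds is d :: ds' then applyds rho ds' (pd (dirI rho d) f) else f.
Definition basefun (rho : seq 'I_n) (b : nat) (hs : seq nat) : VV -> R :=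
  match b with
  | 0 => l | 1 => u | 2 => theta l
  | 3 => match map (onth rho) hs with
         | [:: Some a; Some c] => H h a c | _ => fun _ => 0 end
  | _ => Ps Psi end.
Definition afun rho b hs ds := applyds rho ds (basefun rho b hs).

Fixpoint den (rho : seq 'I_n) (e : ex) (q : VV) : R :=
  match e with
  | Cst c => c%:R
  | At b hs ds => afun rho b hs ds q
  | Add e1 e2 => den rho e1 q + den rho e2 q
  | Mul e1 e2 => den rho e1 q * den rho e2 q
  | Opp e => - den rho e q
  | Sum e => \sum_(a < n) den (a :: rho) e q
  | Der d e => pd (dirI rho d) (den rho e) q
  end.

Fixpoint sumk (k : nat) (F : seq 'I_n -> R) (rho : seq 'I_n) : R :=
  if k is k'.+1 then \sum_(a < n) sumk k' F (a :: rho) else F rho.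
Definition aden rho (a : atom) q := afun rho a.1.1 a.1.2 a.2 q.
Definition pden rho (A : seq atom) q := \prod_(a <- A) aden rho a q.
Definition mden rho (m : mono) q := (m.1.1)%:~R * sumk m.1.2 (fun r => pden r m.2 q) rho.
Definition polyden rho (P : seq mono) q := \sum_(m <- P) mden rho m q.
Definition lden rho (L : seq (int * seq atom)) q := \sum_(p <- L) p.1%:~R * pden rho p.2 q.

Lemma dirI_ren f rho1 rho2 d :
  (forall x, onth rho2 (f x) = onth rho1 x) -> dirI rho2 (dren f d) = dirI rho1 d.
Proof. by move=> Hf; case: d => [|[|v]] //; rewrite /dren /dirI Hf. Qed.

Lemma applyds_ren f rho1 rho2 ds F :
  (forall x, onth rho2 (f x) = onth rho1 x) ->
  applyds rho2 (map (dren f) ds) F = applyds rho1 ds F.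
Proof.
move=> Hf; elim: ds F => [|d ds IH] F; first by [].
by rewrite map_cons /= (dirI_ren _ _ _ d Hf) IH.
Qed.

Lemma aden_ren f rho1 rho2 a q :
  (forall x, onth rho2 (f x) = onth rho1 x) ->
  aden rho2 (aren f a) q = aden rho1 a q.
Proof.
move=> Hf; case: a => [[b hs] ds]; rewrite /aden /aren /afun /=.
rewrite (applyds_ren _ _ _ _ _ Hf); congr applyds.
case: b => [|[|[|[|b]]]] //=.
by rewrite -map_comp (eq_map Hf).
Qed.

Lemma pden_ren f rho1 rho2 A q :
  (forall x, onth rho2 (f x) = onth rho1 x) ->
  pden rho2 (map (aren f) A) q = pden rho1 A q.
Proof.
move=> Hf; rewrite /pden big_map; apply: eq_bigr => a _; exact: aden_ren.
Qed.

Lemma pden_cat rho A B q : pden rho (A ++ B) q = pden rho A q * pden rho B q.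
Proof. by rewrite /pden big_cat. Qed.

Lemma sumk_ext2 k F G rho rho' :
  (forall i, size i = k -> F (i ++ rho) = G (i ++ rho')) ->
  sumk k F rho = sumk k G rho'.
Proof.
elim: k rho rho' => [|k IH] rho rho' HF /=; first exact: (HF [::]).
apply: eq_bigr => a _; apply: IH => i si.
by rewrite -!cat_rcons; apply: HF; rewrite size_rcons si.
Qed.

Lemma sumk_add k1 k2 F rho :
  sumk (k1 + k2) F rho = sumk k1 (fun r => sumk k2 F r) rho.
Proof.
elim: k1 rho => [|k1 IH] rho //=.
by apply: eq_bigr => a _; rewrite IH.
Qed.

Lemma sumk_mull k c F rho : c * sumk k F rho = sumk k (fun r => c * F r) rho.
Proof.
elim: k rho => [|k IH] rho //=; rewrite mulr_sumr; apply: eq_bigr => a _; exact: IH.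
Qed.

Lemma sumk_mulr k c F rho : sumk k F rho * c = sumk k (fun r => F r * c) rho.
Proof.
elim: k rho => [|k IH] rho //=; rewrite mulr_suml; apply: eq_bigr => a _; exact: IH.
Qed.

Lemma sumk_D k F G rho : sumk k F rho + sumk k G rho = sumk k (fun r => F r + G r) rho.
Proof.
elim: k rho => [|k IH] rho //=; rewrite -big_split; apply: eq_bigr => a _; exact: IH.
Qed.

Lemma sumk_sum k (I : Type) (s : seq I) F rho :
  \sum_(i <- s) sumk k (F i) rho = sumk k (fun r => \sum_(i <- s) F i r) rho.
Proof.
elim: s => [|i s IH]; last by rewrite big_cons IH sumk_D; apply: sumk_ext2 => ? _; rewrite big_cons.
rewrite big_nil; elim: k rho => [|k IHk] rho /=; first by rewrite big_nil.
by rewrite big1 // => a _; rewrite -IHk.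
Qed.

Lemma onth_catr (i rho : seq 'I_n) x : onth (i ++ rho) (x + size i) = onth rho x.
Proof. by rewrite onth_cat ltnNge leq_addl /= addnK. Qed.

Lemma mmul_ok rho m1 m2 q : mden rho (mmul m1 m2) q = mden rho m1 q * mden rho m2 q.
Proof.
case: m1 => [[c1 k1] A1]; case: m2 => [[c2 k2] A2]; rewrite /mden /mmul /=.
rewrite rmorphM /= mulrACA; congr (_ * _).
rewrite sumk_add sumk_mulr; apply: sumk_ext2 => i1 si1.
rewrite sumk_mull; apply: sumk_ext2 => i2 si2.
rewrite pden_cat; congr (_ * _); apply: pden_ren => x.
  by rewrite -si2 onth_catr.
rewrite /shv; case: ifP => xk.
  by rewrite !onth_cat si2 xk.
have hx : (k2 <= x)%N by rewrite leqNgt xk.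
rewrite onth_cat si2 ltnNge (leq_trans hx (leq_addr _ _)) /=.
rewrite [RHS]onth_cat si2 xk.
rewrite (_ : x + k1 - k2 = x - k2 + k1)%N; last first.
  by rewrite [in RHS]addnC addnBA // addnC.
by rewrite -si1 onth_catr.
Qed.

Lemma polyden_cat rho P1 P2 q : polyden rho (P1 ++ P2) q = polyden rho P1 q + polyden rho P2 q.
Proof. by rewrite /polyden big_cat. Qed.

Lemma polyden_mul rho P1 P2 q :
  polyden rho [seq mmul m1 m2 | m1 <- P1, m2 <- P2] q = polyden rho P1 q * polyden rho P2 q.
Proof.
elim: P1 => [|m P1 IH]; first by rewrite /polyden big_nil mul0r.
rewrite allpairs_cons polyden_cat IH /polyden big_cons mulrDl big_map.
by congr (_ + _); rewrite mulr_sumr; apply: eq_bigr => m2 _; rewrite mmul_ok.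
Qed.


Lemma applyds_rcons rho ds d F :
  applyds rho (rcons ds d) F = pd (dirI rho d) (applyds rho ds F).
Proof. by elim: ds F => [|d' ds IH] F //=. Qed.

Variable Htheta : forall i q, pd i (theta l) q = theta l q * pd i l q.
Variable Hdv : forall rho (a : atom) i q, dvok a -> derivable (afun rho a.1.1 a.1.2 a.2) q (ev R i).

Lemma lden_cat rho L1 L2 q : lden rho (L1 ++ L2) q = lden rho L1 q + lden rho L2 q.
Proof. by rewrite /lden big_cat. Qed.

Lemma datom_ok rho a d q : dvok a ->
  HD (afun rho a.1.1 a.1.2 a.2) (ev R (dirI rho d)) q (lden rho (datom a d) q).
Proof.
move=> da; split; first exact: Hdv.
rewrite /datom; case: ifP => [/andP[/eqP b2 /eqP d0]|_].
  case: a b2 d0 da => [[b hs] ds] /= -> -> _.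
  rewrite /lden big_seq1 /pden !big_cons big_nil /aden /afun /= mul1r mulr1.
  exact: Htheta.
rewrite /lden big_seq1 /pden big_seq1 mul1r /aden /afun /= applyds_rcons.
by [].
Qed.

Lemma dprod_ok rho A d q : all dvok A ->
  HD (fun q => pden rho A q) (ev R (dirI rho d)) q (lden rho (dprod d A) q).
Proof.
elim: A => [|a A IH] /=.
  move=> _; apply: (@HD_ext _ _ (fun _ => 1)); first by apply/funext => ?; rewrite /pden big_nil.
  rewrite /lden big_nil; exact: HD_cst.
move=> /andP[da dA].
apply: (@HD_ext _ _ (fun q => aden rho a q * pden rho A q)).
  by apply/funext => ?; rewrite /pden big_cons.
rewrite lden_cat /lden !big_map.
have -> : \sum_(j <- datom a d) j.1%:~R * pden rho (j.2 ++ A) q =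
          pden rho A q * lden rho (datom a d) q.
  rewrite /lden mulr_sumr; apply: eq_bigr => p _; rewrite pden_cat; ring.
have -> : \sum_(j <- dprod d A) j.1%:~R * pden rho (a :: j.2) q =
          aden rho a q * lden rho (dprod d A) q.
  rewrite /lden mulr_sumr; apply: eq_bigr => p _; rewrite /pden big_cons; ring.
rewrite addrC; apply: HD_mul; last exact: IH.
exact: datom_ok.
Qed.

Lemma dirI_shift (i rho : seq 'I_n) d : dirI (i ++ rho) (dshift (size i) d) = dirI rho d.
Proof. by case: d => [|[|v]] //=; rewrite onth_catr. Qed.

Lemma sumk_HD k (F : seq 'I_n -> VV -> R) (G : seq 'I_n -> R) v rho p :
  (forall i, size i = k -> HD (F (i ++ rho)) v p (G (i ++ rho))) ->
  HD (fun q => sumk k (fun r => F r q) rho) v p (sumk k G rho).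
Proof.
elim: k rho => [|k IH] rho HF /=; first exact: (HF [::]).
apply: HD_sum => a; apply: IH => i si.
by rewrite -cat_rcons; apply: HF; rewrite size_rcons si.
Qed.

Lemma dmono_ok rho m d q : all dvok m.2 ->
  HD (fun q => mden rho m q) (ev R (dirI rho d)) q (polyden rho (dmono d m) q).
Proof.
case: m => [[c k] A] /= dA; rewrite /mden /polyden /dmono big_map /=.
have -> : \sum_(j <- dprod (dshift k d) A) ((c * j.1)%:~R * sumk k (fun r => pden r j.2 q) rho)
   = c%:~R * sumk k (fun r => lden r (dprod (dshift k d) A) q) rho.
  rewrite /lden -(sumk_sum k _ _ (fun p r => p.1%:~R * pden r p.2 q)) mulr_sumr.
  by apply: eq_bigr => j _; rewrite -sumk_mull rmorphM mulrA.
apply: (@HD_ext _ _ (fun q => c%:~R * sumk k (fun r => pden r A q) rho)) => //.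
have -> : c%:~R * sumk k (fun r => lden r (dprod (dshift k d) A) q) rho =
   (fun _ => c%:~R) q * sumk k (fun r => lden r (dprod (dshift k d) A) q) rho +
   sumk k (fun r => pden r A q) rho * 0 by rewrite mulr0 addr0.
apply: HD_mul; first exact: HD_cst.
apply: sumk_HD => i si; rewrite -(dirI_shift i) si; exact: dprod_ok.
Qed.

Lemma dpoly_ok rho P d q : all (fun m => all dvok m.2) P ->
  HD (fun q => polyden rho P q) (ev R (dirI rho d)) q (polyden rho (dpoly d P) q).
Proof.
move=> /allP HP; rewrite {2}/polyden /dpoly big_flatten big_map /=.
apply: HD_sum_in => m mP; exact: dmono_ok (HP m mP).
Qed.

Lemma norm_ok e : okder e -> forall rho q, den rho e q = polyden rho (norm e) q.
Proof.
elim: e => [c|b hs ds|e1 IH1 e2 IH2|e1 IH1 e2 IH2|e IH|e IH|d e IH] /=.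
- move=> _ rho q; rewrite /polyden big_seq1 /mden /= /pden big_nil mulr1.
  by rewrite pmulrn.
- move=> _ rho q; rewrite /polyden big_seq1 /mden /= /pden big_seq1 mul1r.
  by [].
- by case/andP => o1 o2 rho q; rewrite polyden_cat IH1 ?IH2.
- by case/andP => o1 o2 rho q; rewrite polyden_mul IH1 ?IH2.
- move=> o rho q; rewrite IH // /polyden big_map -sumrN; apply: eq_bigr => m _.
  by rewrite /mden /= rmorphN mulNr.
- move=> o rho q; under eq_bigr => a _ do rewrite IH //.
  rewrite /polyden big_map exchange_big /=; apply: eq_bigr => m _.
  by rewrite /mden /= mulr_sumr.
- case/andP => o dn rho q.
  have -> : den rho e = fun q => polyden rho (norm e) q by apply/funext => q'; rewrite IH.
  by case: (dpoly_ok rho (norm e) d q dn).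
Qed.


Definition zatom (a : atom) : bool := (3 <= a.1.1)%N && has (fun d => (d < 2)%N) a.2.
Definition clok (a : atom) : bool :=
  match a.1.1 with 0 => (size a.2 <= 3)%N | 1 => (size a.2 <= 2)%N
  | 3 => (size a.2 <= 2)%N | _ => false end.
Fixpoint bpass (x : nat) (ds : seq nat) : seq nat :=
  if ds is y :: ds' then (if (y < x)%N then y :: bpass x ds' else x :: bpass y ds')
  else [:: x].
Definition bub1 (ds : seq nat) := if ds is x :: ds' then bpass x ds' else [::].
Definition buball (ds : seq nat) := iter (size ds) bub1 ds.
Definition sort2 (hs : seq nat) :=
  if hs is [:: x; y] then (if (y < x)%N then [:: y; x] else hs) else hs.
Definition acanon (a : atom) : atom :=
  (a.1.1, (if a.1.1 == 3%N then sort2 a.1.2 else a.1.2),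
   if clok a then buball a.2 else a.2).

Fixpoint lexle (s t : seq nat) : bool :=
  match s, t with
  | [::], _ => true
  | _ :: _, [::] => false
  | x :: s', y :: t' => (x < y)%N || ((x == y) && lexle s' t')
  end.
Definition aenc (a : atom) : seq nat := a.1.1 :: size a.1.2 :: a.1.2 ++ size a.2 :: a.2.
Definition aleq (a b : atom) := lexle (aenc a) (aenc b).
Definition menc (m : mono) : seq nat := m.1.2 :: flatten (map aenc m.2).

Definition swv (i x : nat) : nat := if x == i then i.+1 else if x == i.+1 then i else x.
Definition mswap (m : mono) (i : nat) : mono :=
  if (i.+1 < m.1.2)%N then (m.1.1, m.1.2, map (aren (swv i)) m.2) else m.
Definition canon1 (m : mono) : mono := (m.1.1, m.1.2, sort aleq (map acanon m.2)).
Fixpoint words (k : nat) : seq (seq nat) :=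
  if k is k'.+1 then [seq w ++ rev (iota j (k' - j)) | w <- words k', j <- iota 0 k]
  else [:: [::]].
Definition pickmin (m : mono) (L : seq mono) : mono :=
  foldl (fun b c => if lexle (menc c) (menc b) then c else b) m L.
Definition canonm (m : mono) : mono :=
  pickmin (canon1 m) [seq canon1 (foldl mswap m w) | w <- words m.1.2].
Fixpoint addm (m : mono) (P : seq mono) : seq mono :=
  if P is m' :: P' then
    (if (m'.1.2 == m.1.2) && (m'.2 == m.2) then (m'.1.1 + m.1.1, m'.1.2, m'.2) :: P'
     else m' :: addm m P')
  else [:: m].
Definition reduce (P : seq mono) : seq mono :=
  foldr addm [::] (map canonm [seq m <- P | ~~ has zatom m.2]).
Definition check (e : ex) : bool :=
  okder e && all (fun m => m.1.1 == 0) (reduce (norm e)).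
Variable Hzero : forall rho a q, zatom a -> aden rho a q = 0.
Variable Hcl : forall rho b hs ds1 d1 d2 ds2, clok (b, hs, ds1 ++ d1 :: d2 :: ds2) ->
  afun rho b hs (ds1 ++ d1 :: d2 :: ds2) = afun rho b hs (ds1 ++ d2 :: d1 :: ds2).
Variable Hsym : forall rho x y ds, afun rho 3 [:: x; y] ds = afun rho 3 [:: y; x] ds.

Lemma bpass_size x ds : size (bpass x ds) = (size ds).+1.
Proof. by elim: ds x => [|y ds IH] x //=; case: ifP => _ /=; rewrite IH. Qed.

Lemma bpass_ok rho b hs pre x ds : clok (b, hs, pre ++ x :: ds) ->
  afun rho b hs (pre ++ bpass x ds) = afun rho b hs (pre ++ x :: ds).
Proof.
elim: ds pre x => [|y ds IH] pre x //= ok.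
case: ifP => _.
  rewrite -[pre ++ y :: _]cat_rcons IH; last by move: ok; rewrite /clok /= ?size_cat ?size_rcons /= ?addnS.
  rewrite cat_rcons Hcl //; by move: ok; rewrite /clok /= !size_cat.
rewrite -[pre ++ x :: bpass _ _]cat_rcons IH; last by move: ok; rewrite /clok /= ?size_cat ?size_rcons /= ?addnS.
by rewrite cat_rcons.
Qed.

Lemma bub1_ok rho b hs ds : clok (b, hs, ds) ->
  afun rho b hs (bub1 ds) = afun rho b hs ds /\ size (bub1 ds) = size ds.
Proof.
case: ds => [|x ds] //= ok; split; last by rewrite bpass_size.
exact: (bpass_ok rho b hs [::] x ds ok).
Qed.

Lemma clok_size b hs ds ds' : size ds = size ds' -> clok (b, hs, ds) = clok (b, hs, ds').
Proof. by rewrite /clok /= => ->. Qed.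

Lemma iter_bub1_size k ds : size (iter k bub1 ds) = size ds.
Proof.
elim: k => [|k IHk] //=.
rewrite -IHk; case: (iter k bub1 ds) => [|x s] //=; exact: bpass_size.
Qed.

Lemma buball_ok rho b hs ds : clok (b, hs, ds) ->
  afun rho b hs (buball ds) = afun rho b hs ds.
Proof.
rewrite /buball; move: (size ds) => k ok.
elim: k => [|k IH] //=.
have [e1 e2] := bub1_ok rho b hs (iter k bub1 ds) (etrans (clok_size _ _ _ _ (iter_bub1_size k ds)) ok).
by rewrite e1 IH.
Qed.

Lemma acanon_ok rho a q : aden rho (acanon a) q = aden rho a q.
Proof.
case: a => [[b hs] ds]; rewrite /aden /acanon /=.
transitivity (afun rho b (if b == 3%N then sort2 hs else hs) ds q).
  case ok: (clok (b, hs, ds)) => //; rewrite buball_ok //.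
case: eqP => [->|] //.
case: hs => [|x [|y [|z hs]]] //=; case: ifP => _ //.
by rewrite Hsym.
Qed.

Lemma pden_perm rho A B q : perm_eq A B -> pden rho A q = pden rho B q.
Proof. by move=> pAB; rewrite /pden (perm_big _ pAB). Qed.

Lemma canon1_ok rho m q : mden rho (canon1 m) q = mden rho m q.
Proof.
rewrite /mden /canon1 /=; congr (_ * _); apply: sumk_ext2 => i _.
rewrite (pden_perm _ _ _ _ (permEl (perm_sort aleq _))) /pden big_map.
by apply: eq_bigr => a _; rewrite acanon_ok.
Qed.

Fixpoint swp (i : nat) (r : seq 'I_n) : seq 'I_n :=
  match i, r with
  | 0, a :: b :: r' => b :: a :: r'
  | i'.+1, a :: r' => a :: swp i' r'
  | _, _ => r
  end.

Lemma swvS i x : swv i.+1 x.+1 = (swv i x).+1.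
Proof. by rewrite /swv !eqSS; case: eqP => //; case: eqP. Qed.

Lemma onth_swp i r x : (i.+1 < size r)%N -> onth r (swv i x) = onth (swp i r) x.
Proof.
elim: i r x => [|i IH] r x.
  by case: r => [|a [|b r]] // _; case: x => [|[|x]].
case: r => [|a r] // ir; case: x => [|x] //.
by rewrite swvS /= IH.
Qed.

Lemma swp_cat i (io r : seq 'I_n) a b : size io = i ->
  swp i (io ++ a :: b :: r) = io ++ b :: a :: r.
Proof. by elim: io i => [|x io IH] [|i] //= [] /IH ->. Qed.

Lemma sumk_swp k i (G : seq 'I_n -> R) rho : (i.+1 < k)%N ->
  sumk k (fun r => G (swp i r)) rho = sumk k G rho.
Proof.
move=> ik; rewrite -(subnK ik) !sumk_add; apply: sumk_ext2 => j _ /=.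
rewrite exchange_big /=; apply: eq_bigr => a _; apply: eq_bigr => b _.
by apply: sumk_ext2 => io sio; rewrite swp_cat.
Qed.


Lemma mswap_ok rho m i q : mden rho (mswap m i) q = mden rho m q.
Proof.
rewrite /mswap; case: ifP => // ik; rewrite /mden /=; congr (_ * _).
rewrite -(sumk_swp _ _ (fun r => pden r m.2 q) rho ik).
apply: sumk_ext2 => io sio; apply: pden_ren => x.
by apply: onth_swp; rewrite size_cat sio ltn_addr.
Qed.

Lemma foldl_mswap_ok rho m w q : mden rho (foldl mswap m w) q = mden rho m q.
Proof. by elim: w m => [|i w IH] m //=; rewrite IH mswap_ok. Qed.

Lemma pickmin_ok rho m L q V : (forall c, c \in L -> mden rho c q = V) ->
  mden rho m q = V -> mden rho (pickmin m L) q = V.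
Proof.
rewrite /pickmin; elim: L m => [|c L IH] m //= HL Hm.
apply: IH; first by move=> c' c'L; apply: HL; rewrite in_cons c'L orbT.
by case: ifP => _ //; apply: HL; rewrite mem_head.
Qed.

Lemma canonm_ok rho m q : mden rho (canonm m) q = mden rho m q.
Proof.
apply: pickmin_ok; last exact: canon1_ok.
move=> c /mapP[w _ ->]; by rewrite canon1_ok foldl_mswap_ok.
Qed.

Lemma mden_addc rho c1 c2 k A q :
  mden rho (c1 + c2, k, A) q = mden rho (c1, k, A) q + mden rho (c2, k, A) q.
Proof. by rewrite /mden /= rmorphD mulrDl. Qed.

Lemma addm_ok rho m P q : polyden rho (addm m P) q = mden rho m q + polyden rho P q.
Proof.
elim: P => [|m' P IH] /=; first by rewrite /polyden big_seq1 big_nil addr0.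
case: ifP => [/andP[/eqP e1 /eqP e2]|_].
  rewrite /polyden !big_cons mden_addc addrA; congr (_ + _).
  by rewrite addrC; clear IH; case: m e1 e2 => [[c k] A] /= <- <-; case: m' => [[??]?].
rewrite /polyden !big_cons -/(polyden _ _ _) IH; rewrite addrCA.
by [].
Qed.

Lemma sumk0 k rho : sumk k (fun _ => 0) rho = 0.
Proof. by elim: k rho => [|k IH] rho //=; rewrite big1 // => a _; rewrite IH. Qed.

Lemma pden_zero rho A q : has zatom A -> pden rho A q = 0.
Proof.
elim: A => [|a A IH] //= /orP[za|hA]; rewrite /pden big_cons.
  by rewrite Hzero // mul0r.
by rewrite -/(pden _ _ _) IH // mulr0.
Qed.

Lemma mden_zero rho m q : has zatom m.2 -> mden rho m q = 0.
Proof.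
move=> hz; rewrite /mden (sumk_ext2 m.1.2 (fun r => pden r m.2 q) (fun _ => 0) rho rho) ?sumk0 ?mulr0 //.
by move=> i _; rewrite pden_zero.
Qed.

Lemma reduce_ok rho P q : polyden rho (reduce P) q = polyden rho P q.
Proof.
rewrite /reduce; elim: P => [|m P IH] //=.
case: ifP => hz /=.
  by rewrite addm_ok IH canonm_ok /polyden big_cons.
by rewrite IH /polyden big_cons mden_zero ?add0r //; move/negbFE: hz.
Qed.

Lemma check_ok e q : check e -> den [::] e q = 0.
Proof.
case/andP=> ok /allP z; rewrite norm_ok // -reduce_ok /polyden big1_seq // => m /andP[_ mP].
by rewrite /mden (eqP (z m mP)) mul0r.
Qed.

End Frame.
Arguments optdir {n}. Arguments dirI {n}. Arguments applyds {R n}. Arguments sumk {R n}.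
Section Spec.
Variables (R : realType) (n : nat).
Local Notation VV := 'rV[R]_(2 + n).
Local Notation X := 'rV[R]_n.

Lemma xpart_lin (a : R) (v w : VV) : xpart (a *: v + w) = a *: xpart v + xpart w.
Proof. by apply/matrixP => i j; rewrite !mxE. Qed.

Lemma xpart_evx (a : 'I_n) : xpart (ev R (xI a)) = ev R a.
Proof.
apply/matrixP => i j; rewrite /xpart /ev /xI !mxE.
by rewrite eq_rshift.
Qed.

Lemma xpart_evlo (j : 'I_2) : xpart (ev R (lshift n j)) = 0.
Proof.
apply/matrixP => i k; rewrite /xpart /ev !mxE.
by rewrite [rshift _ _ == _]eq_sym eq_lrshift andbF.
Qed.

Lemma xpart_ev (i : 'I_(2 + n)) :
  (exists a, i = xI a) \/ xpart (ev R i) = 0.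
Proof.
case: (splitP i) => [j ij|k ik].
  right; rewrite (_ : i = lshift n j) ?xpart_evlo //; exact: val_inj.
by left; exists k; apply: val_inj.
Qed.

Lemma comp_eq (g : X -> R) (p v : VV) :
  (fun h0 : R => h0^-1 *: (((g \o @xpart R n) \o shift p) (h0 *: v) - (g \o @xpart R n) p)) =
  (fun h0 : R => h0^-1 *: ((g \o shift (xpart p)) (h0 *: xpart v) - g (xpart p))).
Proof. by apply/funext => h0 /=; rewrite xpart_lin. Qed.

Lemma derive_xpart (g : X -> R) (p v : VV) :
  derive (g \o @xpart R n) p v = derive g (xpart p) (xpart v).
Proof. by rewrite /derive comp_eq. Qed.

Lemma derivable_xpart (g : X -> R) (p v : VV) :
  derivable (g \o @xpart R n) p v <-> derivable g (xpart p) (xpart v).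
Proof. by rewrite /derivable comp_eq. Qed.

Lemma pd_xpart (g : X -> R) i :
  pd i (g \o @xpart R n) = (fun x => derive g x (xpart (ev R i))) \o @xpart R n.
Proof. by apply/funext => p; rewrite /pd derive_xpart. Qed.

Lemma pd_xpart_x (g : X -> R) a : pd (xI a) (g \o @xpart R n) = pd a g \o @xpart R n.
Proof. by rewrite pd_xpart xpart_evx. Qed.

Lemma pd_xpart_0 (g : X -> R) i : xpart (ev R i) = 0 -> pd i (g \o @xpart R n) = (fun _ => 0).
Proof. by move=> e; rewrite pd_xpart e; apply/funext => p /=; rewrite derive0. Qed.

Lemma Ck_xpart k (g : X -> R) : Ck k g -> Ck k (g \o @xpart R n).
Proof.
have cx : forall g : X -> R, continuous g -> continuous (g \o @xpart R n).
  by move=> g0 cg x; apply: continuous_comp; [exact: continuous_rsubmx | exact: cg].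
elim: k g => [|k IH] g /=; first exact: cx.
case=> cg [dg pg]; split; first exact: cx.
split.
  move=> i p; apply/derivable_xpart.
  case: (xpart_ev i) => [[a ->]|->]; last exact: derivable0.
  by rewrite xpart_evx.
move=> i; case: (xpart_ev i) => [[a ->]|e].
  by rewrite pd_xpart_x; apply: IH.
by rewrite pd_xpart_0 //; exact: Ck_cst0.
Qed.

Lemma applyds_cat (rho : seq 'I_n) ds1 ds2 (f : VV -> R) :
  applyds rho (ds1 ++ ds2) f = applyds rho ds2 (applyds rho ds1 f).
Proof. by elim: ds1 f => [|d ds IH] f //=. Qed.

Lemma applyds_0 (rho : seq 'I_n) ds : applyds rho ds (fun _ : VV => (0 : R)) = (fun _ => 0).
Proof. by elim: ds => [|d ds IH] //=; rewrite pd_cst0. Qed.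

Lemma applyds_xpart_zero (rho : seq 'I_n) ds (G : X -> R) :
  has (fun d => (d < 2)%N) ds -> applyds rho ds (G \o @xpart R n) = (fun _ => 0).
Proof.
elim: ds G => [|d ds IH] G //= /orP[d2|hd].
  rewrite pd_xpart_0 ?applyds_0 //.
  by case: d d2 => [|[|d]] // _; [exact: (xpart_evlo (@Ordinal 2 0 isT)) | exact: (xpart_evlo (@Ordinal 2 1 isT))].
case: d => [|[|d]].
- by rewrite pd_xpart_0 ?applyds_0 //; exact: (xpart_evlo (@Ordinal 2 0 isT)).
- by rewrite pd_xpart_0 ?applyds_0 //; exact: (xpart_evlo (@Ordinal 2 1 isT)).
rewrite /= /optdir; case: (onth rho d) => [a|].
  by rewrite pd_xpart_x; apply: IH.
by rewrite pd_xpart_0 ?applyds_0 //; exact: (xpart_evlo (@Ordinal 2 0 isT)).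
Qed.

Lemma Ck_applyds (rho : seq 'I_n) ds k (f : VV -> R) :
  Ck (size ds + k) f -> Ck k (applyds rho ds f).
Proof.
elim: ds f => [|d ds IH] f //= Hf; apply: IH.
by apply: Ck_pd; rewrite -addSn.
Qed.

End Spec.
Declare Scope ex_scope.
Delimit Scope ex_scope with ex.
Notation "a #+ b" := (Add a b) (at level 50, left associativity) : ex_scope.
Notation "a #- b" := (Add a (Opp b)) (at level 50, left associativity) : ex_scope.
Notation "a #* b" := (Mul a b) (at level 40, left associativity) : ex_scope.
Local Open Scope ex_scope.
Definition xd (v : nat) := v.+2.
Definition eL ds := At 0 [::] ds.
Definition eU ds := At 1 [::] ds.
Definition eTH := At 2 [::] [::].
Definition eH j k ds := At 3 [:: j; k] ds.
Definition ePS ds := At 4 [::] ds.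
Definition eV := eTH  #*  eU [::].
Definition eSq e := e  #*  e.

Definition eAA : ex :=
  Sum (Sum (eH 1 0 [::]  #*  eL [:: xd 1]  #*  eL [:: xd 0]  #-  eH 1 0 [:: xd 1]  #*  eL [:: xd 0]
              #-  eH 1 0 [::]  #*  eL [:: xd 1; xd 0]))
   #-  eSq (eL [:: 0])  #-  eSq (eL [:: 1])  #+  eL [:: 0; 0]  #+  eL [:: 1; 1]  #-  ePS [::].

Definition ecc (jv kv : nat) : ex :=
  Sum (Sum (Cst 2  #*  eH (jv + 2) 0 [::]  #*  Der (xd 0) (eH 1 (kv + 2) [::]  #*  eL [:: xd 1])
             #-  Der (xd 0) (eH (jv + 2) (kv + 2) [::]  #*  eH 1 0 [::]  #*  eL [:: xd 1])))
   #+  eH jv kv [::]  #*  (eL [:: 0; 0]  #+  eL [:: 1; 1]  #-  ePS [::]).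

Definition eBB : ex :=
  Cst 2  #*  (eAA  #*  ePS [::]  #-  Der 0 (eAA  #*  eL [:: 0])  #-  Der 1 (eAA  #*  eL [:: 1])
             #+  Sum (Sum (Der (xd 0) (eAA  #*  eH 1 0 [::]  #*  eL [:: xd 1])))).

Definition eVk (kv : nat) : ex :=
  Cst 2  #*  Sum (Sum (Sum (eH 2 (kv + 3) [::]  #*  eH 1 0 [::]  #*  eL [:: xd 1]
                           #*  Der (xd 2) eV  #*  Der (xd 0) eV)))
   #+  Sum (eH 0 (kv + 1) [::]  #*  eAA  #*  eL [:: xd 0])  #*  eSq eV
   #-  ePS [::]  #*  eV  #*  Sum (eH 0 (kv + 1) [::]  #*  Der (xd 0) eV)
   #-  Sum (Sum (Sum (eH 2 (kv + 3) [::]  #*  eH 1 0 [::]  #*  eL [:: xd 2]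
                      #*  Der (xd 1) eV  #*  Der (xd 0) eV)))
   #-  Cst 2  #*  (eL [:: 0]  #*  Der 0 eV  #+  eL [:: 1]  #*  Der 1 eV)
        #*  Sum (eH 0 (kv + 1) [::]  #*  Der (xd 0) eV)
   #+  Sum (eH 0 (kv + 1) [::]  #*  eL [:: xd 0])  #*  (eSq (Der 0 eV)  #+  eSq (Der 1 eV)).

Definition eMM : ex :=
  eL [:: 0]  #*  (eSq (Der 0 eV)  #-  eSq (Der 1 eV)
                  #+  Sum (Sum (eH 1 0 [::]  #*  Der (xd 1) eV  #*  Der (xd 0) eV)))
   #-  Cst 2  #*  Sum (Sum (eH 1 0 [::]  #*  eL [:: xd 1]  #*  Der (xd 0) eV))  #*  Der 0 eV
   #+  Cst 2  #*  eL [:: 1]  #*  Der 1 eV  #*  Der 0 eV  #+  ePS [::]  #*  eV  #*  Der 0 eV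
   #-  eAA  #*  eL [:: 0]  #*  eSq eV.

Definition eNN : ex :=
  eL [:: 1]  #*  (eSq (Der 1 eV)  #-  eSq (Der 0 eV)
                  #+  Sum (Sum (eH 1 0 [::]  #*  Der (xd 1) eV  #*  Der (xd 0) eV)))
   #-  Cst 2  #*  Sum (Sum (eH 1 0 [::]  #*  eL [:: xd 1]  #*  Der (xd 0) eV))  #*  Der 1 eV
   #+  Cst 2  #*  eL [:: 0]  #*  Der 1 eV  #*  Der 0 eV  #+  ePS [::]  #*  eV  #*  Der 1 eV
   #-  eAA  #*  eL [:: 1]  #*  eSq eV.

Definition eXX : ex :=
  eU [:: 0; 0]  #+  eU [:: 1; 1]  #-  Sum (Sum (Der (xd 0) (eH 1 0 [::]  #*  eU [:: xd 1]))).

Definition eLHS : ex :=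
  eSq eTH  #*  eSq eXX  #+  Cst 2  #*  Sum (Der (xd 0) (eVk 0))  #+  Cst 2  #*  Der 0 eMM
   #+  Cst 2  #*  Der 1 eNN.

Definition eHL : ex := Sum (Sum (Der (xd 0) (eH 1 0 [::]  #*  eL [:: xd 1]))).

Definition eRHS : ex :=
  Cst 2  #*  (eL [:: 0; 0]  #-  eL [:: 1; 1]  #+  eHL  #+  ePS [::])  #*  eSq (Der 0 eV)
   #-  Cst 8  #*  Sum (Sum (eH 1 0 [::]  #*  eL [:: 0; xd 1]  #*  Der (xd 0) eV  #*  Der 0 eV))
   #+  Cst 8  #*  eL [:: 1; 0]  #*  Der 1 eV  #*  Der 0 eV
   #-  Cst 8  #*  Sum (Sum (eH 1 0 [::]  #*  eL [:: 1; xd 1]  #*  Der (xd 0) eV  #*  Der 1 eV))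
   #+  Cst 2  #*  (eL [:: 1; 1]  #-  eL [:: 0; 0]  #+  eHL  #+  ePS [::])  #*  eSq (Der 1 eV)
   #+  Cst 2  #*  Sum (Sum (ecc 1 0  #*  Der (xd 1) eV  #*  Der (xd 0) eV))
   #-  Cst 2  #*  Sum (Sum (eH 1 0 [::]  #*  ePS [:: xd 1]  #*  eV  #*  Der (xd 0) eV))
   #+  eBB  #*  eSq eV.

Definition eJ1 : ex :=
  Der 0 (Der 0 eV)  #+  Der 1 (Der 1 eV)
   #-  Sum (Sum (Der (xd 0) (eH 1 0 [::]  #*  Der (xd 1) eV)))  #-  eAA  #*  eV.
Definition eJ2 : ex :=
  Opp (Cst 2  #*  eL [:: 0]  #*  Der 0 eV)  #-  Cst 2  #*  eL [:: 1]  #*  Der 1 eV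
   #+  Cst 2  #*  Sum (Sum (eH 1 0 [::]  #*  eL [:: xd 1]  #*  Der (xd 0) eV))  #-  ePS [::]  #*  eV.

Definition eTOT : ex := eLHS  #-  (eRHS  #+  (eSq eJ1  #+  eSq eJ2)).
Section Main.
Variables (R : realType) (n : nat) (h : 'I_n -> 'I_n -> 'rV[R]_n -> R)
  (l u : 'rV[R]_(2 + n) -> R) (Psi : 'rV[R]_n -> R).
Variable h_sym : forall j k : 'I_n, h j k = h k j.
Variable h_C2 : forall j k : 'I_n, Ck 2 (h j k).
Variable u_C2 : Ck 2 u.
Variable l_C3 : Ck 3 l.
Variable Psi_C1 : Ck 1 Psi.
Local Notation VV := 'rV[R]_(2 + n).

Lemma theta_HD i (q : VV) :
  derivable (theta l) q (ev R i) /\ pd i (theta l) q = theta l q * pd i l q.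
Proof.
have dl : derivable l q (ev R i) := Ck_der l_C3 i q.
set e := ev R i.
pose g := fun t : R => l (t *: e + q).
have dg : derivable g 0 1 by apply/line_derivable; rewrite scale0r add0r.
have dexp : derivable (@expR R) (g 0) 1 by exact: derivable_expR.
have dc : derivable (fun t : R => theta l (t *: e + q)) 0 1.
  apply/derivable1_diffP.
  have -> : (fun t : R => theta l (t *: e + q)) = expR \o g by [].
  by apply: differentiable_comp; apply/derivable1_diffP.
split.
  by move/line_derivable: dc; rewrite scale0r add0r.
have E1 : derive (fun t : R => theta l (t *: e + q)) 0 1 = derive (theta l) q e.
  by rewrite line_derive scale0r add0r.
have E2 : derive (expR \o g) 0 1 = expR (g 0) * derive g 0 1.
  have := derive1_comp dg dexp; rewrite !derive1E => ->.
  have dE : derive expR (g 0) 1 = expR (g 0) := congr1 (fun F => F (g 0)) (derive_expR R).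
  by rewrite dE.
have E3 : derive g 0 1 = derive l q e by rewrite /g line_derive scale0r add0r.
rewrite /pd -E1.
change (derive (expR \o g) 0 1 = theta l q * derive l q e).
by rewrite E2 E3 /g scale0r add0r.
Qed.

Definition bnd (b : nat) : nat :=
  match b with 0 => 3 | 1 => 2 | 3 => 2 | _ => 1 end.

Lemma base_Ck rho b hs : b <> 2%N -> Ck (bnd b) (basefun R n h l u Psi rho b hs).
Proof.
case: b => [_|[_|[H2|[_|b _]]]].
- exact: l_C3.
- exact: u_C2.
- by case: H2.
- rewrite /basefun; case: (map (onth rho) hs) => [|[a|] [|[c|] [|? ?]]];
    try exact: Ck_cst0.
  exact: (Ck_xpart _ _ 2 _ (h_C2 a c)).
- exact: (Ck_xpart _ _ 1 _ Psi_C1).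
Qed.

Lemma basefun_xpart rho b hs : (3 <= b)%N ->
  exists G : 'rV[R]_n -> R, basefun R n h l u Psi rho b hs = G \o @xpart R n.
Proof.
case: b => [|[|[|b]]] // _.
case: b => [|b].
  rewrite /basefun; case: (map (onth rho) hs) => [|[a|] [|[c|] [|? ?]]];
    try by exists (fun _ => 0).
  by exists (h a c).
by exists Psi.
Qed.

Lemma Hdv rho (a : atom) i q : dvok a ->
  derivable (afun R n h l u Psi rho a.1.1 a.1.2 a.2) q (ev R i).
Proof.
case: a => [[b hs] ds] ok.
change (derivable (applyds rho ds (basefun R n h l u Psi rho b hs)) q (ev R i)).
case: (eqVneq b 2%N) => [b2|b2].
  move: ok; rewrite b2 /dvok => /eqP /= ->.
  by case: (theta_HD i q).
have sz : (size ds + 1 <= bnd b)%N.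
  by move: ok b2; rewrite /dvok /=; case: b => [|[|[|[|[|b]]]]] //; rewrite ?addn1 ?size_eq0 //= => /eqP ->.
have := Ck_applyds R n rho ds 1 _ (Ck_le sz (base_Ck rho b hs (fun e => (negP b2) (introT eqP e)))).
by move/Ck_der; apply.
Qed.

Lemma Hcl rho b hs ds1 d1 d2 ds2 : clok (b, hs, ds1 ++ d1 :: d2 :: ds2) ->
  afun R n h l u Psi rho b hs (ds1 ++ d1 :: d2 :: ds2) =
  afun R n h l u Psi rho b hs (ds1 ++ d2 :: d1 :: ds2).
Proof.
move=> ok.
have [b2 sz1] : b <> 2%N /\ (size (ds1 ++ d1 :: d2 :: ds2) <= bnd b)%N.
  by move: ok; rewrite /clok /=; case: b => [|[|[|[|b]]]] // H; split.
have sz0 : (size ds1 + 2 <= size (ds1 ++ d1 :: d2 :: ds2))%N.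
  by rewrite size_cat leq_add2l.
have sz := leq_trans sz0 sz1.
have Hg := Ck_applyds R n rho ds1 2 _ (Ck_le sz (base_Ck rho b hs b2)).
rewrite /afun !applyds_cat.
change (applyds rho ds2 (pd (dirI rho d2) (pd (dirI rho d1) (applyds rho ds1 (basefun R n h l u Psi rho b hs)))) =
        applyds rho ds2 (pd (dirI rho d1) (pd (dirI rho d2) (applyds rho ds1 (basefun R n h l u Psi rho b hs))))).
have E : pd (dirI rho d2) (pd (dirI rho d1) (applyds rho ds1 (basefun R n h l u Psi rho b hs))) =
         pd (dirI rho d1) (pd (dirI rho d2) (applyds rho ds1 (basefun R n h l u Psi rho b hs))).
  apply/funext => p; exact: (clairaut _ _ _ (dirI rho d1) (dirI rho d2) p Hg).
by rewrite E.
Qed.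

Lemma Hzero rho (a : atom) q : zatom a -> aden R n h l u Psi rho a q = 0.
Proof.
case: a => [[b hs] ds]; rewrite /zatom => /andP[b3 hz].
change (applyds rho ds (basefun R n h l u Psi rho b hs) q = 0).
have [G ->] := basefun_xpart rho b hs b3.
by rewrite (applyds_xpart_zero R n rho ds G hz).
Qed.

Lemma Hsym rho x y ds :
  afun R n h l u Psi rho 3 [:: x; y] ds = afun R n h l u Psi rho 3 [:: y; x] ds.
Proof.
rewrite /afun; congr applyds.
change (match [:: onth rho x; onth rho y] with
        | [:: Some a; Some c] => H h a c | _ => fun _ => 0 end =
        match [:: onth rho y; onth rho x] with
        | [:: Some a; Some c] => H h a c | _ => fun _ => 0 end).
case: (onth rho x) => [a|]; case: (onth rho y) => [c|] //.
by rewrite /H h_sym.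
Qed.

Lemma Htheta i q : pd i (theta l) q = theta l q * pd i l q.
Proof. by case: (theta_HD i q). Qed.

Lemma ineq_aux (L Rr a b : R) : L - (Rr + (a * a + b * b)) = 0 -> Rr <= L.
Proof.
move=> E; rewrite -subr_ge0 (_ : L - Rr = a * a + b * b).
  by rewrite addr_ge0 // -expr2 sqr_ge0.
by move/eqP: E; rewrite subr_eq0 => /eqP ->; rewrite addrC addKr.
Qed.

Lemma main_ineq (p : VV) : rhs31 h l u Psi p <= lhs31 h l u Psi p.
Proof.
have hc : check eTOT by vm_compute.
have E := @check_ok R n h l u Psi Htheta Hdv Hzero Hcl Hsym eTOT p hc.
have E2 : den R n h l u Psi [::] eLHS p - (den R n h l u Psi [::] eRHS p +
   (den R n h l u Psi [::] eJ1 p * den R n h l u Psi [::] eJ1 p +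
    den R n h l u Psi [::] eJ2 p * den R n h l u Psi [::] eJ2 p)) = 0 := E.
have cR : den R n h l u Psi [::] eRHS p = rhs31 h l u Psi p by reflexivity.
have cL : den R n h l u Psi [::] eLHS p = lhs31 h l u Psi p.
  rewrite /lhs31 real_normK ?num_real //; reflexivity.
rewrite -cR -cL; exact: (ineq_aux _ _ _ _ E2).
Qed.

End Main.

Local Close Scope ex_scope.

Theorem corollary3p1 (R : realType) (n : nat)
  (h : 'I_n -> 'I_n -> 'rV[R]_n -> R)
  (l u : 'rV[R]_(2 + n) -> R) (Psi : 'rV[R]_n -> R)
  (h_sym : forall j k : 'I_n, h j k = h k j)
  (h_C2 : forall j k : 'I_n, Ck 2 (h j k))
  (u_C2 : Ck 2 u) (l_C3 : Ck 3 l) (Psi_C1 : Ck 1 Psi) :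
  forall p : 'rV[R]_(2 + n),
    rhs31 h l u Psi p <= lhs31 h l u Psi p.
Proof. exact: main_ineq. Qed.
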